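(* Let $\mathbf{L}$ be a distributive lattice and $n\ge1$ an integer. A subset $F\subseteq\mathbf{L}$ is an $n$-filter if and only if it is an intersection of prime $n$-filters on $\mathbf{L}$ (the empty intersection being $\mathbf{L}$).
   Context: For a set $X$, $Y\subseteq_n X$ means $Y$ is a non-empty subset of $X$ with $|Y|\le n$. An $n$-filter on a lattice is an upset $F$ such that for every non-empty finite $X\subseteq F$: if $\bigwedge Y\in F$ for every $Y\subseteq_n X$ then $\bigwedge X\in F$. A prime $n$-filter is an $n$-filter $F$ such that $a\vee b\in F$ implies $a\in F$ or $b\in F$ (the empty set and $\mathbf{L}$ count as prime $n$-filters). *)

(* Defs.v *)
From mathcomp Require Import all_boot all_order.
Set Implicit Arguments. Unset Strict Implicit. Unset Printing Implicit Defensive.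
Import Order.Theory.
Local Open Scope order_scope.

(* Subsets of the lattice are predicates T -> Prop (the lattice may be infinite).
   A non-empty finite subset X is represented by a list [x :: s] (duplicates and
   order are irrelevant for membership and for the meet). *)
Section Defs.
Context {d : Order.disp_t} {T : latticeType d}.

Definition nemeet (x : T) (s : seq T) : T := foldr Order.meet x s.

Definition upset (F : T -> Prop) : Prop := forall a b : T, a <= b -> F a -> F b.

Definition nfilter (n : nat) (F : T -> Prop) : Prop :=
  upset F /\
  forall (x : T) (s : seq T),
    (forall z, z \in x :: s -> F z) ->
    (forall (y : T) (t : seq T),
        (forall z, z \in y :: t -> z \in x :: s) ->
        (size (undup (y :: t)) <= n)%N ->
        F (nemeet y t)) ->
    F (nemeet x s).

Definition prime_nfilter (n : nat) (F : T -> Prop) : Prop :=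
  nfilter n F /\ forall a b : T, F (a `|` b) -> F a \/ F b.

End Defs.

(* Main.v *)
Require Import Defs.
From mathcomp Require Import all_boot all_order.
From mathcomp Require Import boolp classical_sets.
From Stdlib Require Import Classical.
Import Order.Theory.
Local Open Scope order_scope.

Section Aux.
Context {d : Order.disp_t} {L : distrLatticeType d}.

Lemma nemeet_le (x : L) s z : z \in x :: s -> nemeet x s <= z.
Proof.
rewrite /nemeet; elim: s z => [|y s IH] z /=; first by rewrite inE => /eqP ->.
rewrite !inE => /or3P [/eqP->|/eqP->|zs].
- by apply: (le_trans (leIr _ _)); apply: IH; rewrite inE eqxx.
- exact: leIl.
- by apply: (le_trans (leIr _ _)); apply: IH; rewrite inE zs orbT.
Qed.

Lemma le_nemeet (w x : L) s : (forall z, z \in x :: s -> w <= z) -> w <= nemeet x s.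
Proof.
rewrite /nemeet; elim: s => [|y s IH] /= H; first by apply: H; rewrite inE eqxx.
rewrite lexI H ?inE ?eqxx ?orbT //= IH // => z; rewrite inE => /orP[/eqP->|zs].
  by apply: H; rewrite inE eqxx.
by apply: H; rewrite !inE zs !orbT.
Qed.

Lemma nemeet_eq (x : L) s y t : x :: s =i y :: t -> nemeet x s = nemeet y t.
Proof.
move=> E; apply/le_anti/andP; split; apply: le_nemeet => z zin; apply: nemeet_le.
  by rewrite E. by rewrite -E.
Qed.

Lemma nemeet_joinr (x i : L) s :
  nemeet (x `|` i) (map (fun z => z `|` i) s) = nemeet x s `|` i.
Proof. by elim: s => [|y s IH] //=; rewrite IH joinIl. Qed.

Fixpoint subs (l : seq L) : seq (seq L) :=
  if l is x :: s then subs s ++ map (cons x) (subs s) else [:: [::]].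

Lemma filter_subs (p : pred L) l : filter p l \in subs l.
Proof.
elim: l => [|x s IH] /=; first by rewrite inE.
by rewrite mem_cat; case: (p x); rewrite ?IH // (mem_map (fun a b => _)) ?IH ?orbT //;
  move=> a b [].
Qed.

Lemma mem_subs l Z : Z \in subs l -> forall z, z \in Z -> z \in l.
Proof.
move: Z; elim: l => [|h t IH] Z /=.
  by rewrite inE => /eqP ->.
rewrite mem_cat => /orP [ZS|/mapP [Z' Z'S ->]] z zZ.
  by rewrite inE (IH Z) ?orbT.
move: zZ; rewrite inE => /orP [/eqP ->|zZ']; first by rewrite inE eqxx.
by rewrite inE (IH Z') ?orbT.
Qed.

Lemma size_undup_eq (l1 l2 : seq L) : l1 =i l2 -> size (undup l1) = size (undup l2).
Proof.
move=> E; apply: perm_size; apply: uniq_perm; rewrite ?undup_uniq // => z.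
by rewrite !mem_undup E.
Qed.

Lemma size_undup_map (g : L -> L) (l : seq L) :
  (size (undup (map g l)) <= size (undup l))%N.
Proof.
rewrite (@size_undup_eq (map g l) (map g (undup l))); last first.
  by move=> z; apply/mapP/mapP => -[w wi ->]; exists w; rewrite ?mem_undup in wi *.
by apply: leq_trans (size_undup _) _; rewrite size_map.
Qed.

Definition ideal (A : L -> Prop) :=
  (forall u v, u <= v -> A v -> A u) /\ (forall u v, A u -> A v -> A (u `|` v)).

Lemma common (A F : L -> Prop) (ws : seq L) i0 :
  upset F -> ideal A -> A i0 ->
  (forall u, ~ A u -> exists j, A j /\ F (u `|` j)) ->
  (forall w, w \in ws -> ~ A w) ->
  exists i, A i /\ forall w, w \in ws -> F (w `|` i).
Proof.
move=> uF [dA jA] Ai0 mx; elim: ws => [|w ws IH] H.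
  by exists i0; split.
have [i1 [Ai1 Hi1]] : exists i, A i /\ forall w, w \in ws -> F (w `|` i).
  by apply: IH => z zs; apply: H; rewrite inE zs orbT.
have [j [Aj Fj]] := mx w (H w (mem_head _ _)).
exists (i1 `|` j); split; first exact: jA.
move=> z; rewrite inE => /orP[/eqP->|zs].
  by apply: uF Fj; apply: leU2 => //; exact: leUr.
by apply: uF (Hi1 z zs); apply: leU2 => //; exact: leUl.
Qed.

Lemma sep (n : nat) (F : L -> Prop) (a : L) :
  (1 <= n)%N -> nfilter n F -> ~ F a ->
  exists G, prime_nfilter n G /\ (forall z, F z -> G z) /\ ~ G a.
Proof.
move=> n1 [uF nF] Fa.
pose Pz (I : set L) := ideal I /\ (forall z, I z -> ~ F z) /\ (forall z, I z -> I a).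
have [A [[[dA jA] [disA aA]] maxA]] : exists A, Pz A /\ forall B, (A `<` B)%classic -> ~ Pz B.
  apply: Zorn_bigcup => Fs FsP tot; split; [split|split].
  - move=> u v uv [Y FY Yv]; exists Y => //; have [[dY _] _] := FsP _ FY; exact: dY uv Yv.
  - move=> u v [Y1 FY1 Y1u] [Y2 FY2 Y2v].
    have [S12|S21] := tot _ _ FY1 FY2.
      exists Y2 => //; have [[_ jY] _] := FsP _ FY2; apply: jY => //; exact: S12.
    exists Y1 => //; have [[_ jY] _] := FsP _ FY1; apply: jY => //; exact: S21.
  - move=> z [Y FY Yz]; have [_ [dis _]] := FsP _ FY; exact: dis.
  - move=> z [Y FY Yz]; exists Y => //; have [_ [_ cl]] := FsP _ FY; exact: cl Yz.
have Aa : A a.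
  apply: NNPP => nAa; apply: (maxA (fun z => z <= a)).
    split; first by move=> z Az; case: nAa; exact: aA Az.
    by move=> H; apply: nAa; apply: H.
  split; [split|split] => //.
  - by move=> u v uv va; exact: le_trans uv va.
  - by move=> u v ua va; rewrite leUx ua va.
  - by move=> z za Fz; apply: Fa; exact: uF za Fz.
have mx : forall u, ~ A u -> exists j, A j /\ F (u `|` j).
  move=> u nAu; apply: NNPP => H.
  apply: (maxA (fun z => exists j, A j /\ z <= j `|` u)).
    split; first by move=> z Az; exists z; split => //; exact: leUl.
    by move=> S; apply: nAu; apply: S; exists a; split => //; exact: leUr.
  split; [split|split].
  - move=> x y xy [j [Aj yj]]; exists j; split => //; exact: le_trans xy yj.
  - move=> x y [j1 [Aj1 x1]] [j2 [Aj2 y2]]; exists (j1 `|` j2); split; first exact: jA.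
    rewrite leUx; apply/andP; split.
      apply: le_trans x1 _; apply: leU2 => //; exact: leUl.
    apply: le_trans y2 _; apply: leU2 => //; exact: leUr.
  - move=> z [j [Aj zj]] Fz; apply: H; exists j; split => //.
    by apply: uF Fz; rewrite joinC.
  - by move=> _ _; exists a; split => //; exact: leUl.
exists (fun z => ~ A z); split; last split.
- split; last first.
    move=> b c nbc; apply: NNPP => H; apply: nbc; apply: jA.
      by apply: NNPP => ?; apply: H; left.
    by apply: NNPP => ?; apply: H; right.
  split; first by move=> u v uv nAu Av; apply: nAu; exact: dA uv Av.
  move=> x s H1 H2 Am.
  pose ws := [seq nemeet (head x Z) (behead Z) |
                Z <- subs (x :: s) & (Z != [::]) && (size (undup Z) <= n)%N].
  have Hws : forall w, w \in ws -> ~ A w.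
    move=> w /mapP [Z]; rewrite mem_filter => /andP [/andP [Zn Zs] Zsub] ->.
    case: Z Zn Zs Zsub => [//|z0 zs] _ Zs Zsub /=; apply: H2 => //.
    by move=> z zZ; exact: (mem_subs _ _ Zsub _ zZ).
  have [i [Ai Hi]] := @common A F ws _ uF (conj dA jA) Am mx Hws.
  have C : forall y t, (forall z, z \in y :: t -> z \in x :: s) ->
      (size (undup (y :: t)) <= n)%N -> F (nemeet y t `|` i).
    move=> y t sub sz.
    have EZ : filter (mem (y :: t)) (x :: s) =i y :: t.
      by move=> z; rewrite mem_filter; apply/andP/idP => [[]//|zy]; split => //; apply: sub.
    have : y \in filter (mem (y :: t)) (x :: s) by rewrite EZ mem_head.
    case Ez: (filter (mem (y :: t)) (x :: s)) => [//|z0 zs] _.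
    rewrite Ez in EZ; rewrite -(nemeet_eq _ _ _ _ EZ); apply: Hi.
    apply/mapP; exists (z0 :: zs) => //; rewrite mem_filter -Ez filter_subs andbT Ez.
    by rewrite (@size_undup_eq _ (y :: t) EZ) sz.
  have FF := nF (x `|` i) (map (fun z => z `|` i) s).
  rewrite (nemeet_joinr x i s) in FF.
  apply: (disA (nemeet x s `|` i)); first exact: jA.
  set f := fun z => z `|` i.
  have Em : (x `|` i) :: map f s = map f (x :: s) by [].
  apply: FF.
    rewrite Em => z /mapP [w ws' ->]; apply: (C w [::]) => // z'.
    by rewrite inE => /eqP ->.
  rewrite Em => y' t' sub sz.
  pose g z := nth x (x :: s) (index z (map f (x :: s))).
  have fg : forall z, z \in map f (x :: s) -> f (g z) = z.
    move=> z zin; rewrite /g -(nth_map x (f x)); first exact: nth_index.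
    by rewrite -(size_map f) index_mem.
  have gin : forall z, z \in map f (x :: s) -> g z \in x :: s.
    move=> z zin; apply: mem_nth; by rewrite -(size_map f) index_mem.
  have Ey : y' :: t' = map f (map g (y' :: t')).
    rewrite -map_comp map_id_in // => z zin /=; exact: fg (sub z zin).
  have -> : nemeet y' t' = nemeet (f (g y')) (map f (map g t')).
    by case: Ey => <- <-.
  rewrite (nemeet_joinr (g y') i (map g t')); apply: C.
    move=> z; rewrite -/(map g (y' :: t')) => /mapP [z' z'in ->]; exact: gin (sub z' z'in).
  by apply: leq_trans (size_undup_map g (y' :: t')) sz.
- by move=> z Fz Az; exact: disA Az Fz.
- by move=> H; exact: H Aa.
Qed.

End Aux.

Theorem mainTheorem10 (d : Order.disp_t) (L : distrLatticeType d) (n : nat)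
  (F : L -> Prop) :
  (1 <= n)%N ->
  (nfilter n F <->
   exists P : (L -> Prop) -> Prop,
     (forall G, P G -> prime_nfilter n G) /\
     (forall a : L, F a <-> (forall G, P G -> G a))).
Proof.
move=> n1; split.
  move=> nF; exists (fun G => prime_nfilter n G /\ forall z, F z -> G z); split.
    by move=> G [].
  move=> a; split; first by move=> Fa G [_ H]; exact: H.
  move=> H; apply: NNPP => Fa; have [G [pG [FG Ga]]] := @sep _ _ n F a n1 nF Fa.
  by apply: Ga; apply: H.
move=> [P [HP HF]]; split.
  move=> u v uv /HF Fu; apply/HF => G PG.
  by have [[uG _] _] := HP G PG; apply: uG uv (Fu G PG).
move=> x s H1 H2; apply/HF => G PG; have [[_ nG] _] := HP G PG.
apply: nG => [z zin|y t sub sz]; first exact: (proj1 (HF z) (H1 z zin)).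
exact: (proj1 (HF _) (H2 y t sub sz)).
Qed.
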